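(* Let $\lambda\in P$, $\lhd\in\mathrm{RO}(\lambda,\Delta^+)$ and $w\in W$. For every $A\in\mathcal{A}(w,\Gamma)$ one has $\mathrm{wt}(A)=\mathrm{wt}(\Xi(A))$.
   Context: Let $\mathfrak{g}$ be a finite-dimensional complex simple Lie algebra with root system $\Delta$, positive roots $\Delta^+$, Weyl group $W$ with length function $\ell$ and reflections $s_\alpha$, weight lattice $P$, $\mathfrak{h}^*_{\mathbb{R}}=P\otimes_{\mathbb{Z}}\mathbb{R}$, pairing $\langle\cdot,\cdot\rangle$, $\alpha^\vee$ the coroot of $\alpha$, $\rho=\frac12\sum_{\alpha\in\Delta^+}\alpha$. For $\alpha\in\Delta$, $\operatorname{sgn}(\alpha)=\pm1$ according as $\alpha\in\pm\Delta^+$, and $|\alpha|=\operatorname{sgn}(\alpha)\alpha$. For $\alpha\in\Delta$, $k\in\mathbb{Z}$, the affine reflection $s_{\alpha,k}$ of $\mathfrak{h}^*_{\mathbb{R}}$ is $s_{\alpha,k}(\nu)=\nu-(\langle\nu,\alpha^\vee\rangle-k)\alpha$. For $\lambda\in P$, $\Delta^+(\lambda)_{>0}$, $\Delta^+(\lambda)_{=0}$, $\Delta^+(\lambda)_{<0}$ are the sets of $\alpha\in\Delta^+$ with $\langle\lambda,\alpha^\vee\rangle>0$, $=0$, $<0$. Quantum Bruhat graph $\mathrm{QBG}(W)$: vertices $W$; an edge $x\xrightarrow{\alpha}y$ ($\alpha\in\Delta^+$) whenever $y=xs_\alpha$ and either $\ell(y)=\ell(x)+1$ (Bruhat edge) or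 $\ell(y)=\ell(x)-2\langle\rho,\alpha^\vee\rangle+1$ (quantum edge). Reflection orders: a total order $\lhd$ on $\Delta^+$ is a reflection order if whenever $\alpha,\beta,\alpha+\beta\in\Delta^+$, either $\alpha\lhd\alpha+\beta\lhd\beta$ or $\beta\lhd\alpha+\beta\lhd\alpha$; $\mathrm{RO}(\lambda,\Delta^+)$ is the set of those with $\alpha\lhd\beta\lhd\gamma$ for $\alpha\in\Delta^+(\lambda)_{<0}$, $\beta\in\Delta^+(\lambda)_{=0}$, $\gamma\in\Delta^+(\lambda)_{>0}$. Fix such $\lhd$. Interpolated QLS paths: for $x,y\in W$, $\sigma\in\mathbb{Q}$, write $x\overset{(\lambda,+)}{\Longrightarrow}_\sigma y$ if there is a directed path $x=x_0\xrightarrow{\gamma_1}x_1\to\cdots\xrightarrow{\gamma_r}x_r=y$ in $\mathrm{QBG}(W)$ ($r\ge0$) with all $\gamma_k\in\Delta^+(\lambda)_{>0}$, $\gamma_{k+1}\lhd\gamma_k$ for all $k$, and $\sigma\langle\lambda,\gamma_k^\vee\rangle\in\mathbb{Z}$ for all $k$; $x\overset{(\lambda,-)}{\Longrightarrow}_\sigma y$ is defined identically with $\Delta^+(\lambda)_{<0}$ in place of $\Delta^+(\lambda)_{>0}$. An interpolated QLS path of shape $\lambda$ is a triple $\eta=(x_1,\dots,x_s;y_1,\dots,y_{s-1};\sigma_0,\dots,\sigma_s)$ ($s\ge1$) with $x_i,y_i\in W$, $x_i\ne x_{i+1}$, $y_i\ne y_{i+1}$, $\sigma_i\in\mathbb{Q}$,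 $0=\sigma_0<\sigma_1<\dots<\sigma_s=1$, and for $1\le i\le s-1$: $x_{i+1}\overset{(\lambda,-)}{\Longrightarrow}_{\sigma_i}y_i$ and $y_i\overset{(\lambda,+)}{\Longrightarrow}_{\sigma_i}x_i$. $\mathrm{IQLS}(\lambda)$ is the set of these; its weight is $\mathrm{wt}(\eta):=\sum_{k=1}^s(\sigma_k-\sigma_{k-1})x_k\lambda$. Affine data: real affine coroots $\gamma^\vee+k\tilde\delta$ ($\gamma\in\Delta$, $k\in\mathbb{Z}$, $\tilde\delta$ formal); for $\beta^\vee=\gamma^\vee+k\tilde\delta$ put $\overline{\beta^\vee}=\gamma^\vee$, $\overline\beta=\gamma$, $\deg(\beta^\vee)=k$; it is positive if $k>0$ or ($k=0$, $\gamma\in\Delta^+$), negative otherwise; $t_\lambda(\gamma^\vee+k\tilde\delta)=\gamma^\vee+(k-\langle\lambda,\gamma^\vee\rangle)\tilde\delta$; $\mathrm{Inv}(\lambda)$ is the set of positive real affine coroots $\beta^\vee$ with $t_\lambda(\beta^\vee)$ negative (for these, $\langle\lambda,\overline{\beta^\vee}\rangle>0$ and $\overline\beta\in\Delta^+(\lambda)_{>0}\sqcup(-\Delta^+(\lambda)_{<0})$); put $d(\beta^\vee)=\deg(\beta^\vee)/\langle\lambda,\overline{\beta^\vee}\rangle$. Order $\prec$ on $\Delta^+(\lambda)_{>0}\sqcup(-\Delta^+(\lambda)_{<0})$: elements of $\Delta^+(\lambda)_{>0}$ precede those of $-\Delta^+(\lambda)_{<0}$; $\gamma\prec\gamma'$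 iff $\gamma\lhd\gamma'$ on $\Delta^+(\lambda)_{>0}$; $-\alpha\prec-\alpha'$ iff $\alpha\lhd\alpha'$ on $-\Delta^+(\lambda)_{<0}$. Order $<$ on $\mathrm{Inv}(\lambda)$: $\beta^\vee<\beta'^\vee$ iff $d(\beta^\vee)<d(\beta'^\vee)$, or they are equal and $\overline{\beta'}\prec\overline\beta$. Write $\mathrm{Inv}(\lambda)=\{\beta_1^\vee<\dots<\beta_r^\vee\}$, $\gamma_k:=\overline{\beta_k}$, $d_k:=d(\beta_k^\vee)$, $l_k:=\deg(\beta_k^\vee)$, and $\Gamma:=(\gamma_1,\dots,\gamma_r)$. Admissible subsets: for $w\in W$, $\mathcal{A}(w,\Gamma)$ is the set of $A=\{j_1<\dots<j_p\}\subseteq\{1,\dots,r\}$ such that $w=u_0\xrightarrow{|\gamma_{j_1}|}u_1\to\cdots\xrightarrow{|\gamma_{j_p}|}u_p$ is a directed path in $\mathrm{QBG}(W)$, where $u_a:=ws_{|\gamma_{j_1}|}\cdots s_{|\gamma_{j_a}|}$; its weight is $\mathrm{wt}(A):=-w\,s_{\gamma_{j_1},-l_{j_1}}\cdots s_{\gamma_{j_p},-l_{j_p}}(-\lambda)$. One has $0\le d_{j_1}\le\dots\le d_{j_p}\le1$. The map $\Xi$: let $0<c_1<\dots<c_{t-1}<1$ ($t\ge1$) be the distinct values among $d_{j_1},\dots,d_{j_p}$ lying strictly between $0$ and $1$; put $c_0:=0$, $c_t:=1$. For $1\le a\le t$ let $m_a:=\#\{b\mid d_{j_b}<c_a\}$;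 for $1\le a\le t-1$ let $n_a:=m_a+\#\{b\mid m_a<b\le m_{a+1},\ \gamma_{j_b}\in-\Delta^+\}$. Then $\Xi(A):=(x_1,\dots,x_t;y_1,\dots,y_{t-1};\sigma_0,\dots,\sigma_t)$ with $x_i:=u_{m_{t+1-i}}$, $y_i:=u_{n_{t-i}}$, $\sigma_i:=1-c_{t-i}$; this lies in $\mathrm{IQLS}(\lambda)$. *)

(* Defs.v *)
(* Root system of a finite-dimensional complex simple Lie
   algebra, realized on h^*_Q = Q^n in the basis of simple roots. *)
From Stdlib Require Import ClassicalDescription.
From HB Require Import structures.
From mathcomp Require Import all_boot all_order all_algebra.

Set Implicit Arguments. Unset Strict Implicit. Unset Printing Implicit Defensive.
Import Order.TTheory GRing.Theory Num.Theory.
Local Open Scope ring_scope.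

Section RootSystem.
Variables (n : nat) (B : 'M[rat]_n) (roots : seq 'cV[rat]_n).

Local Notation vec := 'cV[rat]_n.
Local Notation mat := 'M[rat]_n.

Definition bil (u v : vec) : rat := (u^T *m B *m v) ord0 ord0.

(* <nu, alpha^vee> = 2 (alpha, nu) / (alpha, alpha) *)
Definition cop (nu a : vec) : rat := 2 * bil a nu / bil a a.

Definition reflM (a : vec) : mat := 1%:M - (2 / bil a a) *: (a *m (a^T *m B)).

Definition saff (a : vec) (k : rat) (nu : vec) : vec := nu - (cop nu a - k) *: a.

Definition sroot (i : 'I_n) : vec := delta_mx i ord0.

Definition irreducible_roots : Prop :=
  forall X Y : seq vec, perm_eq roots (X ++ Y) ->
    (forall a b, a \in X -> b \in Y -> bil a b = 0) -> X = [::] \/ Y = [::].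

(* reduced, irreducible, crystallographic root system in Q^n (with an
   invariant positive definite form B) whose simple roots (a base) are the
   standard basis vectors *)
Definition root_system : Prop :=
  [/\ (0 < n)%N, B^T = B, (forall v : vec, v != 0 -> 0 < bil v v),
      uniq roots & 0 \notin roots] /\
  [/\ (forall a b, a \in roots -> b \in roots -> reflM a *m b \in roots),
      (forall a b, a \in roots -> b \in roots -> cop b a \is a Num.int),
      (forall a (c : rat), a \in roots -> c *: a \in roots -> c = 1 \/ c = -1),
      irreducible_roots &
      (forall i, sroot i \in roots) /\
      (forall a, a \in roots ->
         (forall i, a i ord0 \is a Num.int) /\
         ((forall i, 0 <= a i ord0) \/ (forall i, a i ord0 <= 0)))].

Definition isPos (a : vec) : bool := [forall i, 0 <= a i ord0].
Definition posroots : seq vec := [seq a <- roots | isPos a].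
Definition absr (a : vec) : vec := if isPos a then a else - a.

Definition is_weight (lam : vec) : Prop :=
  forall a, a \in roots -> cop lam a \is a Num.int.

Definition wprod (t : seq 'I_n) : mat := foldr (fun i M => reflM (sroot i) *m M) 1%:M t.
Definition inW (w : mat) : Prop := exists t : seq 'I_n, w = wprod t.
Definition hasLen (w : mat) (k : nat) : bool := [exists t : k.-tuple 'I_n, wprod t == w].
Definition wlen (w : mat) : nat :=
  match excluded_middle_informative (exists k, hasLen w k) with
  | left h => ex_minn h
  | right _ => 0%N
  end.

Definition rho : vec := (1 / 2%:R) *: \sum_(a <- posroots) a.

Definition qbg_edge (x : mat) (a : vec) (y : mat) : Prop :=
  [/\ inW x, a \in posroots, y = x *m reflM a &
      (wlen y = (wlen x).+1 \/
       (wlen y)%:R = (wlen x)%:R - 2 * cop rho a + 1 :> rat)].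

Section Lambda.
Variables (lam : vec) (ord : seq vec).

Definition lhd (a b : vec) : bool := (index a ord < index b ord)%N.

Definition refl_order : Prop :=
  perm_eq ord posroots /\
  forall a b, a \in posroots -> b \in posroots -> a + b \in posroots ->
    (lhd a (a + b) && lhd (a + b) b) || (lhd b (a + b) && lhd (a + b) a).

Definition RO : Prop :=
  refl_order /\
  forall a b, a \in posroots -> b \in posroots ->
    (cop lam a < 0 /\ cop lam b = 0) \/ (cop lam a < 0 /\ 0 < cop lam b) \/
    (cop lam a = 0 /\ 0 < cop lam b) -> lhd a b.

(* real affine coroots gamma^vee + k delta, encoded as (gamma, k) *)
Definition aff_pos (g : vec) (k : rat) : bool := (0 < k) || ((k == 0) && isPos g).
(* degree of t_lambda (gamma^vee + k delta) *)
Definition tdeg (b : vec * int) : rat := b.2%:~R - cop lam b.1.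
Definition inInv (b : vec * int) : bool :=
  (b.1 \in roots) && aff_pos b.1 b.2%:~R && ~~ aff_pos b.1 (tdeg b).

(* a finite range of candidate degrees containing all members of Inv *)
Definition krange (g : vec) : seq int :=
  let K := (absz (numq (cop lam g))).+1 in
  [seq (i%:Z - K%:Z) | i <- iota 0 (K.*2.+1)%N].
Definition Inv_list : seq (vec * int) :=
  [seq b <- flatten [seq [seq (g, k) | k <- krange g] | g <- roots] | inInv b].

Definition dInv (b : vec * int) : rat := b.2%:~R / cop lam b.1.
Definition prec (g g' : vec) : bool :=
  if isPos g then (if isPos g' then lhd g g' else true)
  else (if isPos g' then false else lhd (- g) (- g')).
Definition ltInv (b b' : vec * int) : bool :=
  (dInv b < dInv b') || ((dInv b == dInv b') && prec b'.1 b.1).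
Definition leInv (b b' : vec * int) : bool := (b == b') || ltInv b b'.

Definition Inv_sorted : seq (vec * int) := sort leInv Inv_list.
Definition rr : nat := size Inv_sorted.
Definition betaI (k : nat) : vec * int := nth (0, 0) Inv_sorted k.  (* 0-based *)
Definition gam (k : nat) : vec := (betaI k).1.
Definition lk (k : nat) : int := (betaI k).2.
Definition dk (k : nat) : rat := dInv (betaI k).

Section Adm.
Variables (w : mat) (js : seq nat).  (* A = {j_1 < ... < j_p}, 0-based *)

Definition uAt (a : nat) : mat :=
  foldl (fun M j => M *m reflM (absr (gam j))) w (take a js).

Definition admissible : Prop :=
  [/\ sorted ltn js, all (fun j => j < rr)%N js &
      forall a, (a < size js)%N ->
        qbg_edge (uAt a) (absr (gam (nth 0%N js a))) (uAt a.+1)].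

Definition wtA : vec :=
  - (w *m foldr (fun j nu => saff (gam j) (- (lk j)%:~R) nu) (- lam) js).

Definition ds : seq rat := [seq dk j | j <- js].
Definition cs_inner : seq rat :=
  sort (fun x y : rat => x <= y) (undup [seq x <- ds | (0 < x) && (x < 1)]).
Definition tt : nat := (size cs_inner).+1.
Definition cc (a : nat) : rat := nth 0 (0 :: rcons cs_inner 1) a.
Definition mm (a : nat) : nat := count (fun x => x < cc a) ds.
Definition nn (a : nat) : nat :=
  (mm a + count (fun j => ~~ isPos (gam j)) (drop (mm a) (take (mm a.+1) js)))%N.

Definition Xi : seq mat * seq mat * seq rat :=
  ([seq uAt (mm (tt.+1 - i)) | i <- iota 1 tt],
   [seq uAt (nn (tt - i)) | i <- iota 1 tt.-1],
   [seq 1 - cc (tt - i) | i <- iota 0 tt.+1]).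
End Adm.
End Lambda.
End RootSystem.

(* weight of an interpolated QLS path (x_1..x_s; y_1..y_{s-1}; sigma_0..sigma_s) *)
Definition wtQLS (n : nat) (lam : 'cV[rat]_n)
    (eta : seq 'M[rat]_n * seq 'M[rat]_n * seq rat) : 'cV[rat]_n :=
  let: (xs, _, sig) := eta in
  \sum_(k < size xs) ((nth 0 sig k.+1 - nth 0 sig k) *: (nth 0 xs k *m lam)).

(* Main.v *)
Require Import Defs.
From HB Require Import structures.
From mathcomp Require Import all_boot all_order all_algebra.
From mathcomp Require Import lra zify.
Import Order.TTheory GRing.Theory Num.Theory.
Local Open Scope ring_scope.

Set Implicit Arguments. Unset Strict Implicit. Unset Printing Implicit Defensive.
Section Comb.
Variable V : lmodType rat.

Fixpoint Ssum (lo : rat) (ds : seq rat) (F : nat -> V) : V :=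
  match ds with
  | [::] => (1 - lo) *: F 0%N
  | D :: ds' => (D - lo) *: F 0%N + Ssum D ds' (fun a => F a.+1)
  end.

Fixpoint Rsum (lo : rat) (cs ds : seq rat) (F : nat -> V) : V :=
  match cs with
  | [::] => 0
  | c :: cs' => (c - lo) *: F (count (fun x => x < c) ds) + Rsum c cs' ds F
  end.

Lemma Ssum_one ds F : all (fun x => x == 1) ds -> Ssum 1 ds F = 0.
Proof.
elim: ds F => [|D ds IH] F /=; first by rewrite subrr scale0r.
by case/andP=> /eqP -> H; rewrite subrr scale0r add0r IH.
Qed.

Lemma Ssum_ext lo ds F G : (forall a, F a = G a) -> Ssum lo ds F = Ssum lo ds G.
Proof.
elim: ds lo F G => [|D ds IH] lo F G H /=; first by rewrite H.
by rewrite H (IH _ _ (fun a => G a.+1)).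
Qed.

Lemma Rsum_big lo cs ds F : Rsum lo cs ds F =
  \sum_(i < size cs) (nth 0 cs i - nth 0 (lo :: cs) i) *:
     F (count (fun x => x < nth 0 cs i) ds).
Proof.
elim: cs lo => [|c cs IH] lo /=; first by rewrite big_ord0.
by rewrite big_ord_recl /= IH.
Qed.

Lemma Rsum_cons lo cs D ds F : (forall c, c \in cs -> D < c) ->
  Rsum lo cs (D :: ds) F = Rsum lo cs ds (fun a => F a.+1).
Proof.
elim: cs lo => [|c cs IH] lo //= H.
rewrite H ?mem_head // IH; first by []. 
by move=> c' Hc'; apply: H; rewrite in_cons Hc' orbT.
Qed.

Lemma cs_one (lo : rat) (cs : seq rat) : path <%R lo cs -> (forall x, (x \in cs) = (x == 1)) -> cs = [:: 1].
Proof.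
case: cs => [|c cs] /= P H; first by move: (H 1); rewrite eqxx.
have c1 : c = 1 by apply/eqP; rewrite -H mem_head.
subst c; case: cs P H => [//|c cs] /= /and3P[_ lt1c _] H.
have : c == 1 by rewrite -H !in_cons eqxx orbT.
by move/eqP=> E; rewrite E ltxx in lt1c.
Qed.

Lemma comb (ds : seq rat) (lo : rat) (cs : seq rat) (F : nat -> V) : sorted <=%R ds -> all (fun x => lo <= x <= 1) ds ->
  path <%R lo cs ->
  (forall x, (x \in cs) = (x == 1) || ((x \in ds) && (lo < x < 1))) ->
  Ssum lo ds F = Rsum lo cs ds F.
Proof.
elim: ds lo cs F => [|D ds IH] lo cs F.
  move=> _ _ P H; rewrite (cs_one P) /=; last by move=> x; rewrite H in_nil /= orbF.
  by rewrite addr0.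
move=> Sds /= /andP[/andP[loD D1] Alls] P H.
have Dle : all (fun x => D <= x) ds.
  by move: Sds; rewrite /= (path_sortedE le_trans) => /andP[].
have Sds' : sorted <=%R ds by move: Sds => /= /path_sorted.
have cnt0 : count (fun x => x < D) (D :: ds) = 0%N.
  apply/eqP; rewrite -leqn0 leqNgt -has_count; apply/hasPn => x.
  rewrite in_cons => /predU1P[->|xin]; first by rewrite ltxx.
  by rewrite -leNgt; move/allP: Dle => /(_ x xin).
case: (eqVneq D 1) => [D1e|Dn1].
  subst D.
  have cs1 : cs = [:: 1].
    apply: (cs_one P) => x; rewrite H; case: (eqVneq x 1) => //= xn1.
    rewrite in_cons; apply/negbTE; apply/negP => /and3P[/predU1P[xe|xin] _ x1]; first by rewrite xe eqxx in xn1.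
    by move/allP: Dle => /(_ x xin); rewrite leNgt x1.
  rewrite cs1 /= addr0; rewrite /= in cnt0; rewrite cnt0 Ssum_one ?addr0 //.
  apply/allP => x xin; move/allP: Dle => /(_ x xin) => h1.
  move/allP: Alls => /(_ x xin) /andP[_ h2]; apply/eqP; apply: le_anti; by rewrite h1 h2.
case: (eqVneq D lo) => [Dlo|Dnlo].
  subst lo; rewrite subrr scale0r add0r Rsum_cons; last first.
    move=> c cin; move: (order_path_min lt_trans P) => /allP /(_ c cin) //.
  apply: IH => //.
  move=> x; rewrite H in_cons; case: (eqVneq x D) => [->|]; last by [].
  by rewrite ltxx /= andbF; case: (x \in ds) => //=; rewrite andbF.
have loD' : lo < D by rewrite lt_def Dnlo loD.
have D1' : D < 1 by rewrite lt_def eq_sym Dn1 D1.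
have Din : D \in cs by rewrite H mem_head loD' D1' orbT.
case: cs P H Din => [//|c cs] P H Din.
have Pc : path <%R c cs by move: P => /= /andP[].
have cD : c = D.
  have Hc : c \in c :: cs by rewrite mem_head.
  rewrite H in Hc.
  have gec : D <= c.
    case/orP: Hc => [/eqP ->|/andP[]]; first by [].
    by rewrite in_cons => /predU1P[->|cin] //; move/allP: Dle => /(_ c cin).
  move: Din; rewrite in_cons => /predU1P[//|Dcs].
  move: (order_path_min lt_trans Pc) => /allP /(_ D Dcs) cltD.
  by move: gec; rewrite leNgt cltD.
subst c; rewrite /= in cnt0; rewrite /= cnt0 Rsum_cons; last first.
  by move=> c cin; move: (order_path_min lt_trans Pc) => /allP /(_ c cin).
congr (_ + _); apply: IH => //.
  apply/allP => x xin; move/allP: Alls => /(_ x xin) /andP[_ ->].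
  by move/allP: Dle => /(_ x xin) ->.
move=> x; have Hx := H x; rewrite in_cons in Hx.
case: (eqVneq x D) => [->|xnD].
  rewrite ltxx /= andbF orbF.
  rewrite (negbTE Dn1); apply/negbTE/negP=> Dcs; move: (order_path_min lt_trans Pc) => /allP /(_ D Dcs).
  by rewrite ltxx.
rewrite (negbTE xnD) /= in Hx; rewrite Hx in_cons (negbTE xnD) /=.
case: (eqVneq x 1) => //= xn1.
case xin: (x \in ds) => //=.
move/allP: Dle => /(_ x xin) Dx.
have Dx' : D < x by rewrite lt_def xnD Dx.
case: (x < 1) => /=; last by rewrite !andbF.
by rewrite Dx' (lt_trans loD' Dx').
Qed.
End Comb.

Section Lin.
Variables (n : nat) (B : 'M[rat]_n).

Lemma mulmx_col1 (a : 'cV[rat]_n) (M : 'M[rat]_1) : a *m M = M ord0 ord0 *: a.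
Proof.
apply/matrixP => i j; rewrite !mxE big_ord1 (ord1 j) mulrC.
by [].
Qed.

Lemma reflM_mul (a nu : 'cV[rat]_n) : reflM B a *m nu = nu - cop B nu a *: a.
Proof.
rewrite /reflM mulmxBl mul1mx -scalemxAl -mulmxA mulmx_col1 scalerA.
congr (_ - _ *: _).
by rewrite /cop /bil mulrAC.
Qed.

Lemma saffE (a : 'cV[rat]_n) k nu : saff B a k nu = reflM B a *m nu + k *: a.
Proof.
by rewrite reflM_mul /saff scalerBl opprB addrA addrAC.
Qed.

Lemma reflM_opp (a : 'cV[rat]_n) : reflM B (- a) = reflM B a.
Proof.
have tN : (- a)^T = - (a^T) by apply/matrixP => i j; rewrite !mxE.
rewrite /reflM /bil tN !mulNmx !mulmxN !opprK.
by [].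
Qed.

Lemma reflM_absr (a : 'cV[rat]_n) : reflM B (absr a) = reflM B a.
Proof. by rewrite /absr; case: isPos => //; rewrite reflM_opp. Qed.

Lemma saff_conj (a lam nu : 'cV[rat]_n) d :
  saff B a (- (d * cop B lam a)) nu = reflM B a *m (nu + d *: lam) - d *: lam.
Proof.
rewrite saffE mulmxDr -scalemxAr (reflM_mul a lam) scalerBr scalerA.
by rewrite addrA addrAC addrK scaleNr.
Qed.
End Lin.

Lemma helper1 (V : lmodType rat) (X Y : V) (d lo : rat) :
  - (X - d *: Y + lo *: Y) = (d - lo) *: Y - X.
Proof. by rewrite scalerBl opprD opprB addrAC. Qed.

Section Main.
Variables (n : nat) (B : 'M[rat]_n) (roots : seq 'cV[rat]_n) (lam : 'cV[rat]_n)
  (ord : seq 'cV[rat]_n).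

Local Notation gam := (gam B roots lam ord).
Local Notation lk := (lk B roots lam ord).
Local Notation dk := (dk B roots lam ord).
Local Notation uAt := (uAt B roots lam ord).

Lemma step1 (js : seq nat) (w : 'M[rat]_n) (lo : rat) :
  (forall j, j \in js -> (lk j)%:~R = dk j * cop B lam (gam j)) ->
  - (w *m foldr (fun j nu => saff B (gam j) (- (lk j)%:~R) nu) (- lam) js
     + lo *: (w *m lam))
  = Ssum lo [seq dk j | j <- js] (fun a => uAt w js a *m lam).
Proof.
elim: js w lo => [|j js IH] w lo H /=.
  by rewrite /uAt /= mulmxN scalerBl scale1r opprD opprK addrC.
rewrite H ?mem_head // saff_conj.
set s := reflM B (gam j).
rewrite mulmxBr !mulmxDr !mulmxA -!scalemxAr.
rewrite (Ssum_ext _ _ (G := fun a => uAt (w *m s) js a *m lam)); last first.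
  by move=> a; rewrite /uAt /= reflM_absr.
rewrite -IH; last by move=> j' Hj'; apply: H; rewrite in_cons Hj' orbT.
rewrite /uAt /=.
exact: helper1.
Qed.

Lemma step2 w js : wtQLS lam (Xi B roots lam ord w js) =
  Rsum 0 (rcons (cs_inner B roots lam ord js) 1) (ds B roots lam ord js)
    (fun a => uAt w js a *m lam).
Proof.
rewrite Rsum_big size_rcons /wtQLS /Xi /tt.
set C := cs_inner B roots lam ord js.
set m := size C.
rewrite size_map size_iota.
rewrite (reindex_inj rev_ord_inj); apply: eq_bigr => i _.
have ltim : (i < m.+1)%N := ltn_ord i.
rewrite [nat_of_ord (rev_ord i)]/=.
rewrite !(nth_map 0%N) ?size_iota; try lia.
rewrite !nth_iota; try lia.
have -> : (m.+1 - (0 + (m.+1 - i.+1).+1) = i)%N by lia.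
have -> : (m.+1 - (0 + (m.+1 - i.+1)) = i.+1)%N by lia.
have -> : (m.+2 - (1 + (m.+1 - i.+1)) = i.+1)%N by lia.
have E : forall a b : rat, (1 - a) - (1 - b) = b - a.
  by move=> a b; rewrite opprB addrC addrA subrK.
by rewrite E.
Qed.

Lemma step3 js :
  let C := cs_inner B roots lam ord js in
  (path <%R 0 (rcons C 1)) /\
  (forall x, (x \in rcons C 1) = (x == 1) || ((x \in ds B roots lam ord js) && (0 < x < 1))).
Proof.
move=> C.
have memC : forall x, (x \in C) = (x \in ds B roots lam ord js) && (0 < x < 1).
  by move=> x; rewrite /C /cs_inner mem_sort mem_undup mem_filter andbC.
split; last by move=> x; rewrite mem_rcons in_cons memC.
rewrite rcons_path (path_sortedE lt_trans).
apply/andP; split; [apply/andP; split|].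
- by apply/allP => x; rewrite memC => /andP[_ /andP[]].
- rewrite lt_sorted_uniq_le /C /cs_inner sort_uniq undup_uniq /=.
  exact: (sort_sorted le_total).
- have := mem_last 0 C; rewrite in_cons => /predU1P[->|]; first by [].
  by rewrite memC => /andP[_ /andP[]].
Qed.

Lemma inInv_facts b : inInv B roots lam b ->
  0 < cop B lam b.1 /\ 0 <= (b.2)%:~R :> rat /\ (b.2)%:~R <= cop B lam b.1.
Proof.
rewrite /inInv /aff_pos /tdeg => /andP[/andP[_ h1] h2].
set k : rat := (b.2)%:~R in h1 h2 *; set c := cop B lam b.1 in h2 *.
case P: (isPos b.1) in h1 h2.
  rewrite !andbT in h1 h2; rewrite negb_or in h2; case/andP: h2 => h2 h3.
  have hk : 0 <= k by case/orP: h1 => [/ltW|/eqP ->].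
  rewrite -leNgt in h2.
  have h5 : k - c < 0 by rewrite lt_neqAle h3 h2.
  lra.
rewrite !andbF !orbF in h1 h2; rewrite -leNgt in h2.
lra.
Qed.

Lemma betaI_in j : (j < rr B roots lam ord)%N ->
  betaI B roots lam ord j \in Inv_list B roots lam.
Proof.
move=> hj; rewrite /betaI -(mem_sort (leInv B lam ord)).
exact: mem_nth.
Qed.

Lemma inv_inInv b : b \in Inv_list B roots lam -> inInv B roots lam b.
Proof. by rewrite /Inv_list mem_filter => /andP[]. Qed.

Lemma dk_facts j : (j < rr B roots lam ord)%N ->
  0 <= dk j <= 1 /\ (lk j)%:~R = dk j * cop B lam (gam j).
Proof.
move=> /betaI_in /inv_inInv /inInv_facts [c0 [k0 kc]].
rewrite /dk /dInv /lk /gam; split.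
  apply/andP; split; first exact: divr_ge0 k0 (ltW c0).
  by rewrite ler_pdivrMr // mul1r.
by rewrite divfK // gt_eqF.
Qed.

Lemma neg_root g : root_system B roots -> g \in roots -> ~~ isPos g ->
  - g \in posroots roots.
Proof.
case=> [[_ _ hpos _ h0] [hrefl _ _ _ [_ hsign]]] gin ng.
rewrite /posroots mem_filter; apply/andP; split.
  have [_ [hp|hn]] := hsign g gin.
    by exfalso; move/negP: ng; apply; apply/forallP.
  by apply/forallP => i; rewrite mxE oppr_ge0.
have := hrefl g g gin gin; rewrite reflM_mul.
have gn0 : g != 0 by apply/eqP => g0; rewrite g0 in gin; rewrite gin in h0.
have bpos := hpos g gn0.
rewrite /cop mulfK ?gt_eqF //.
by rewrite scaler_nat mulr2n opprD addrA subrr add0r.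
Qed.

Lemma pos_root g : g \in roots -> isPos g -> g \in posroots roots.
Proof. by move=> gin pg; rewrite /posroots mem_filter pg gin. Qed.

Lemma index_total (T : eqType) (x y : T) (s : seq T) : x \in s -> x != y ->
  (index x s < index y s)%N || (index y s < index x s)%N.
Proof.
move=> xin xy; case: (ltngtP (index x s) (index y s)) => // E.
have yin : y \in s by rewrite -index_mem -E index_mem.
by move/negP: xy; case; apply/eqP; rewrite -(nth_index x xin) E (nth_index x yin).
Qed.

Lemma prec_total g g' : root_system B roots -> refl_order roots ord ->
  g \in roots -> g' \in roots -> g != g' -> prec ord g g' || prec ord g' g.
Proof.
move=> RS [pord _] gin g'in gg'; rewrite /prec /lhd.
case Pg: (isPos g); case Pg': (isPos g') => //=.
  apply: index_total => //; rewrite (perm_mem pord); exact: pos_root.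
apply: index_total; first by rewrite (perm_mem pord); apply: neg_root; rewrite ?Pg.
by rewrite (inj_eq oppr_inj).
Qed.

Lemma leInv_total : root_system B roots -> refl_order roots ord ->
  {in Inv_list B roots lam &, total (leInv B lam ord)}.
Proof.
move=> RS RO b b' hb hb'.
have [c0 _] := inInv_facts (inv_inInv hb).
have gin : b.1 \in roots by move: (inv_inInv hb) => /andP[/andP[]].
have g'in : b'.1 \in roots by move: (inv_inInv hb') => /andP[/andP[]].
rewrite /leInv /ltInv.
case: (ltrgtP (dInv B lam b) (dInv B lam b')) => [lt|gt|E].
- by rewrite /= orbT.
- by rewrite /= !orbT.
rewrite /=.
case: (eqVneq b.1 b'.1) => [g_eq|g_ne].
  have kk : b.2 = b'.2.
    apply: (@intr_inj rat).
    move: E; rewrite /dInv -g_eq => E.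
    have cn0 : cop B lam b.1 != 0 by rewrite gt_eqF.
    by rewrite -(divfK cn0 (b.2)%:~R) E divfK.
  have -> : b = b' by case: b b' g_eq kk {hb hb' c0 gin g'in E} => [? ?] [? ?] /= -> ->.
  by rewrite eqxx.
case/orP: (prec_total RS RO gin g'in g_ne) => ->; by rewrite !orbT.
Qed.

Lemma ds_sorted js : root_system B roots -> refl_order roots ord ->
  sorted ltn js -> all (fun j => j < rr B roots lam ord)%N js ->
  sorted <=%R (ds B roots lam ord js).
Proof.
move=> RS RO sjs ajs.
have S1 : sorted (leInv B lam ord) (Inv_sorted B roots lam ord).
  apply: (sort_sorted_in (leInv_total RS RO)); exact/allP.
have S2 : sorted <=%R (map (dInv B lam) (Inv_sorted B roots lam ord)).
  rewrite sorted_map; apply: sub_sorted S1 => b b'.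
  rewrite /leInv /ltInv /= => /orP[/eqP -> //|/orP[/ltW //|/andP[/eqP -> _ //]]].
rewrite /ds; apply: (homo_sorted_in (P := fun j => j < rr B roots lam ord)%N) => //.
move=> i j hi hj hij.
have := sorted_leq_nth le_trans lexx (dInv B lam (0, 0)) S2.
move=> /(_ i j); rewrite !inE size_map => /(_ hi hj (ltnW hij)).
by rewrite !(nth_map (0, 0)) //.
exact: sjs.
Qed.
End Main.

Unset Implicit Arguments.

Theorem proposition5p10 (n : nat) (B : 'M[rat]_n) (roots : seq 'cV[rat]_n)
    (lam : 'cV[rat]_n) (ord : seq 'cV[rat]_n) (w : 'M[rat]_n) (js : seq nat) :
  root_system B roots ->
  is_weight B roots lam ->
  RO B roots lam ord ->
  inW B w ->
  admissible B roots lam ord w js ->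
  wtA B roots lam ord w js = wtQLS lam (Xi B roots lam ord w js).
Proof.
move=> RS _ [ROo _] _ [sjs ajs _].
have H1 : forall j, j \in js -> (lk B roots lam ord j)%:~R =
    dk B roots lam ord j * cop B lam (gam B roots lam ord j).
  by move=> j hj; exact: (dk_facts (allP ajs j hj)).2.
have := step1 w 0 H1; rewrite scale0r addr0 => E.
rewrite /wtA E step2.
have [P M] := step3 B roots lam ord js.
apply: comb => //.
  exact: ds_sorted.
apply/allP => x /mapP[j hj ->]; exact: (dk_facts (allP ajs j hj)).1.
Qed.
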